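(* Let $p$ be a prime and $n$ a positive integer. If $\{(a_i,b_i,c_i)\}_{i=1}^m$ is a tricolored ordered sum-free set in $\mathbb{F}_p^n$, then $m\le 3N$, where $N$ is the number of monomials in $n$ variables of total degree at most $(p-1)n/3$ in which each variable has degree at most $p-1$; equivalently, \[N=\sum \frac{n!}{n_0!\,n_1!\cdots n_{p-1}!},\] the sum taken over all non-negative integers $n_0,n_1,\ldots,n_{p-1}$ with $n_0+n_1+\cdots+n_{p-1}=n$ and $n_1+2n_2+\cdots+(p-1)n_{p-1}\le (p-1)n/3$.
   Context: A tricolored ordered sum-free set in an abelian group $H$ is a collection $\{(a_i,b_i,c_i)\}_{i=1}^m$ of ordered triples of elements of $H$ such that (i) $a_i+b_i+c_i=0$ for all $i=1,\ldots,m$, and (ii) for all $i,j,k\in\{1,\ldots,m\}$, if $a_i+b_j+c_k=0$ then $i\le j\le k$. *)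

(* Defs.v *)
From mathcomp Require Import all_boot all_algebra.
Set Implicit Arguments. Unset Strict Implicit. Unset Printing Implicit Defensive.
Import GRing.Theory.
Local Open Scope ring_scope.

(* The ambient group F_p^n is the additive group of row vectors 'rV['F_p]_n.
   A family {(a_i,b_i,c_i)}_{i=1}^m is given by three maps 'I_m -> H
   (indices 0..m-1, ordered as naturals). *)
Definition tricolored_ordered_sum_free (H : zmodType) (m : nat)
    (a b c : 'I_m -> H) : Prop :=
  (forall i, a i + b i + c i = 0) /\
  (forall i j k : 'I_m, a i + b j + c k = 0 -> (i <= j)%N /\ (j <= k)%N).

(* N: number of monomials x_1^{e_1}...x_n^{e_n} with each e_t <= p-1 and
   total degree sum e_t <= (p-1)n/3 (i.e. 3 * sum e_t <= (p-1) n). *)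
Definition num_monomials (p n : nat) : nat :=
  #|[set e : {ffun 'I_n -> 'I_p} | (3 * \sum_(t < n) (e t : nat) <= (p - 1) * n)%N]|.

(* Main.v *)
Require Import Defs.
From mathcomp Require Import all_boot all_algebra all_field.
From mathcomp Require Import zify ring.
Set Implicit Arguments. Unset Strict Implicit. Unset Printing Implicit Defensive.
Import GRing.Theory.
Local Open Scope ring_scope.

Definition s0 : 'I_3 := @Ordinal 3 0 isT.
Definition s1 : 'I_3 := @Ordinal 3 1 isT.
Definition s2 : 'I_3 := @Ordinal 3 2 isT.

Definition cnt q (g : {ffun 'I_q -> 'I_3}) (s : 'I_3) : nat := #|[pred l | g l == s]|.
Definition Jt q := option {ffun 'I_q -> 'I_3}.
Definition cf (F : fieldType) q (j : Jt q) : F := if j is Some _ then -1 else 1.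
Definition ex q (j : Jt q) (s : 'I_3) : nat := if j is Some g then cnt g s else 0.

Lemma sum_option (R : zmodType) (T : finType) (G : option T -> R) :
  \sum_(o : option T) G o = G None + \sum_(t : T) G (Some t).
Proof.
rewrite (bigD1 None) //=; congr (_ + _).
case: (pickP (@predT T)) => [t0 _ | T0].
  rewrite (reindex_onto Some (odflt t0)) /=; last by case.
  by apply: eq_bigl => t /=; rewrite eqxx.
by rewrite !big1 // => [t|]; [have := T0 t | case=> // t; have := T0 t].
Qed.

Lemma coord (F : fieldType) q (hF : forall x : F, x ^+ q = (x != 0)%:R) (u v w : F) :
  (u + v + w == 0)%:R = \sum_(j : Jt q) cf F j * (u ^+ ex j s0 * v ^+ ex j s1 * w ^+ ex j s2).
Proof.
have e1 : (u + v + w == 0)%:R = 1 - (u + v + w) ^+ q :> F.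
  by rewrite hF; case: (u + v + w == 0); rewrite ?subr0 ?subrr.
pose vec := fun s : 'I_3 => if s == s0 then u else if s == s1 then v else w.
have e2 : u + v + w = \sum_(s < 3) vec s.
  by rewrite !big_ord_recr big_ord0 /= add0r.
have e3 : (\sum_(s < 3) vec s) ^+ q = \prod_(l < q) \sum_(s < 3) vec s.
  rewrite (eq_bigl (fun l => l \in 'I_q)) // prodr_const; congr (_ ^+ _).
  by rewrite card_ord.
rewrite e1 e2 e3 bigA_distr_bigA sum_option /= !expr0 !mulr1.
congr (_ + _); rewrite -sumrN; apply: eq_bigr => g _; rewrite mulN1r; congr (- _).
rewrite (partition_big g predT) //=.
rewrite !big_ord_recr big_ord0 /= mul1r.
rewrite /cnt -!prodr_const.
have E : forall s : 'I_3, \prod_(i | true && (g i == s)) vec (g i) = \prod_(i in [pred l | g l == s]) vec s.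
  by move=> s; apply: eq_big => // i /= /eqP ->.
rewrite !E.
have W0 : widen_ord (leqnSn 2) (widen_ord (leqnSn 1) ord_max) = s0 by apply: val_inj.
have W1 : widen_ord (leqnSn 2) ord_max = s1 by apply: val_inj.
have W2 : ord_max = s2 by apply: val_inj.
by rewrite W0 W1 W2.
Qed.

Definition mono (F : fieldType) q n (e : {ffun 'I_n -> 'I_q.+1}) (x : 'rV[F]_n) : F :=
  \prod_(t < n) x 0 t ^+ e t.
Definition Ex q n (f : {ffun 'I_n -> Jt q}) (s : 'I_3) : {ffun 'I_n -> 'I_q.+1} :=
  [ffun t => inord (ex (f t) s)].
Definition cp (F : fieldType) q n (f : {ffun 'I_n -> Jt q}) : F := \prod_t cf F (f t).

Lemma ex_le q (j : Jt q) s : (ex j s <= q)%N.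
Proof. case: j => [g|//] /=; rewrite /cnt -{9}(card_ord q); exact: max_card. Qed.

Lemma ex_sum q (j : Jt q) : (ex j s0 + ex j s1 + ex j s2 <= q)%N.
Proof.
case: j => [g|//] /=; rewrite /cnt -!sum1_card.
apply: (@leq_trans (\sum_(l < q) 1)%N); last by rewrite sum1_card card_ord.
rewrite [X in (_ <= X)%N](partition_big g predT) //=.
rewrite !big_ord_recr big_ord0 /=.
have W0 : widen_ord (leqnSn 2) (widen_ord (leqnSn 1) ord_max) = s0 by apply: val_inj.
have W1 : widen_ord (leqnSn 2) ord_max = s1 by apply: val_inj.
have W2 : ord_max = s2 by apply: val_inj.
by rewrite W0 W1 W2.
Qed.

Lemma ExE q n (f : {ffun 'I_n -> Jt q}) s t : (Ex f s t : nat) = ex (f t) s.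
Proof. by rewrite ffunE inordK // ltnS ex_le. Qed.

Lemma deg q n (f : {ffun 'I_n -> Jt q}) :
  (\sum_t (Ex f s0 t : nat) + \sum_t (Ex f s1 t : nat) + \sum_t (Ex f s2 t : nat) <= q * n)%N.
Proof.
rewrite -!big_split /=.
have -> : (q * n = \sum_(t < n) q)%N by rewrite sum_nat_const card_ord mulnC.
apply: leq_sum => t _; rewrite !ExE; exact: ex_sum.
Qed.

Lemma vec_eq0 (F : fieldType) n (v : 'rV[F]_n) : (v == 0)%:R = \prod_t (v 0 t == 0)%:R :> F.
Proof.
case: eqP => [->|/eqP nz].
  by rewrite big1 // => t _; rewrite mxE eqxx.
have [t vt] : exists t, v 0 t != 0.
  apply/existsP; apply: contraR nz => /existsPn H; apply/eqP/rowP => t.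
  by rewrite mxE; apply/eqP; have := H t; rewrite negbK.
by rewrite (bigD1 t) //= (negbTE vt) mul0r.
Qed.

Lemma expand (F : fieldType) q n (hF : forall x : F, x ^+ q = (x != 0)%:R) (x y z : 'rV[F]_n) :
  (x + y + z == 0)%:R = \sum_(f : {ffun 'I_n -> Jt q})
     cp F f * (mono (Ex f s0) x * mono (Ex f s1) y * mono (Ex f s2) z).
Proof.
rewrite vec_eq0.
under eq_bigr do rewrite !mxE (coord hF).
rewrite bigA_distr_bigA; apply: eq_bigr => f _.
rewrite !big_split /= /mono /cp.
congr (_ * (_ * _ * _)); apply: eq_bigr => t _; by rewrite ExE.
Qed.

Definition Sset q n : {set {ffun 'I_n -> 'I_q.+1}} :=
  [set e : {ffun 'I_n -> 'I_q.+1} | (3 * \sum_(t < n) (e t : nat) <= (q.+1 - 1) * n)%N].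

Definition Pf (F : fieldType) q n (al : {ffun 'I_n -> 'I_q.+1}) (y z : 'rV[F]_n) : F :=
  \sum_(f : {ffun 'I_n -> Jt q} | Ex f s0 == al) cp F f * (mono (Ex f s1) y * mono (Ex f s2) z).
Definition Qf (F : fieldType) q n (be : {ffun 'I_n -> 'I_q.+1}) (x z : 'rV[F]_n) : F :=
  \sum_(f : {ffun 'I_n -> Jt q} | (Ex f s0 \notin Sset q n) && (Ex f s1 == be))
     cp F f * (mono (Ex f s0) x * mono (Ex f s2) z).
Definition Rf (F : fieldType) q n (ga : {ffun 'I_n -> 'I_q.+1}) (x y : 'rV[F]_n) : F :=
  \sum_(f : {ffun 'I_n -> Jt q} | (Ex f s0 \notin Sset q n) && (Ex f s1 \notin Sset q n) && (Ex f s2 == ga))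
     cp F f * (mono (Ex f s0) x * mono (Ex f s1) y).

Lemma regroup (R : zmodType) (I K : finType) (S : {set K}) (C : pred I) (E : I -> K) (G : I -> R) :
  \sum_(k in S) \sum_(i | C i && (E i == k)) G i = \sum_(i | C i && (E i \in S)) G i.
Proof.
rewrite [RHS](partition_big E (mem S)); last by move=> i /andP [].
apply: eq_bigr => k kS; apply: eq_bigl => i.
by case: (C i); case: eqP => [->|]; rewrite ?kS ?andbT ?andbF.
Qed.

Lemma L1 (F : fieldType) q n (hF : forall x : F, x ^+ q = (x != 0)%:R) (x y z : 'rV[F]_n) :
  (x + y + z == 0)%:R =
    \sum_(al in Sset q n) mono al x * Pf al y z
  + \sum_(be in Sset q n) mono be y * Qf be x z
  + \sum_(ga in Sset q n) mono ga z * Rf ga x y.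
Proof.
rewrite (expand hF) (bigID (fun f => Ex f s0 \in Sset q n)) /=.
rewrite [X in _ + X](bigID (fun f => Ex f s1 \in Sset q n)) /= addrA.
congr (_ + _ + _).
- rewrite -(regroup _ predT); apply: eq_bigr => al _; rewrite /Pf mulr_sumr.
  by apply: eq_big => [f //|f /eqP <-]; ring.
- rewrite -(regroup _ (fun f => Ex f s0 \notin Sset q n)); apply: eq_bigr => al _.
  rewrite /Qf mulr_sumr.
  by apply: eq_big => [f //|f /andP [_ /eqP <-]]; ring.
- transitivity (\sum_(f | ((Ex f s0 \notin Sset q n) && (Ex f s1 \notin Sset q n)) && (Ex f s2 \in Sset q n))
     cp F f * (mono (Ex f s0) x * mono (Ex f s1) y * mono (Ex f s2) z)).
    apply: eq_bigl => f /=.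
    case hA: (Ex f s0 \in Sset q n); case hB: (Ex f s1 \in Sset q n) => //=.
    symmetry; move: hA hB; rewrite !inE subn1 /= => /negbT hA /negbT hB.
    have := deg f; move: hA hB; set a0 := (\sum_t _)%N; set a1 := (\sum_t _)%N; set a2 := (\sum_t _)%N.
    set N := (q * n)%N => hA hB hd; apply/negPn/negP => hC; lia.
  rewrite -(regroup (Sset q n) (fun f => (Ex f s0 \notin Sset q n) && (Ex f s1 \notin Sset q n)) (fun f => Ex f s2)).
  apply: eq_bigr => ga _; rewrite /Rf mulr_sumr.
  by apply: eq_big => [f //|f /andP [_ /eqP <-]]; ring.
Qed.

Lemma fermat q (hp : prime q.+1) (x : 'F_q.+1) : x ^+ q = (x != 0)%:R.
Proof.
case: eqP => [->|/eqP nz].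
  have q0 : (0 < q)%N by have := prime_gt1 hp.
  by rewrite expr0n /=; case: (q) q0.
have := expf_card x; rewrite card_Fp // exprS => h.
by apply: (mulfI nz); rewrite mulr1.
Qed.

Lemma count_inj (aT rT : finType) (f : aT -> rT) (D : {pred aT}) (A : {set rT}) :
  {in D &, injective f} -> (forall x, x \in D -> f x \in A) -> (#|D| <= #|A|)%N.
Proof.
move=> inj fA; rewrite -(card_in_imset inj); apply: subset_leq_card.
by apply/subsetP => y /imsetP [x xD ->]; exact: fA.
Qed.

Lemma card_pon (K : finType) (F : finType) (y0 : F) (S : {pred K}) :
  #|[set f : {ffun K -> F} | f \in pffun_on y0 S predT]| = (#|F| ^ #|S|)%N.
Proof. by rewrite cardsE card_pffun_on. Qed.

Lemma pon_if (K : finType) (F : finType) (y0 : F) (S : {pred K}) (g : K -> F) :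
  [ffun k => if k \in S then g k else y0] \in [set f : {ffun K -> F} | f \in pffun_on y0 S predT].
Proof.
rewrite inE; apply/pffun_onP; split => // .
apply/subsetP => k; rewrite !inE ffunE; case: ifP => //; by rewrite eqxx.
Qed.

Lemma partA (F : finFieldType) (m : nat) (K : finType) (S : {set K}) (B : K -> 'I_m -> F) :
  exists h : {ffun 'I_m -> F}, (forall be, be \in S -> \sum_j h j * B be j = 0) /\
    (#|F| ^ m <= #|F| ^ #|S| * #|F| ^ #|[set j | h j != 0%R]|)%N.
Proof.
pose Kp := fun h : {ffun 'I_m -> F} => [forall be in S, \sum_j h j * B be j == 0].
have K0 : Kp [ffun=> 0].
  apply/forallP => be; apply/implyP => _; rewrite big1 // => j _; by rewrite ffunE mul0r.
pose supp (h : {ffun 'I_m -> F}) := [set j | h j != 0%R].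
case: (@arg_maxnP _ [ffun=> 0] Kp (fun h => #|supp h|) K0) => h hK hmax.
have hK' : forall be, be \in S -> \sum_j h j * B be j = 0.
  by move=> be beS; apply/eqP; move/forallP: hK => /(_ be); rewrite beS.
exists h; split => //.
pose phi (v : {ffun 'I_m -> F}) :=
  ([ffun be => if be \in S then \sum_j v j * B be j else 0],
   [ffun j => if j \in supp h then v j else 0]).
have inj : {in [set: {ffun 'I_m -> F}] &, injective phi}.
  move=> v w _ _ E.
  have E1 := congr1 fst E; have E2 := congr1 snd E; simpl in E1, E2.
  have dS : forall j, j \in supp h -> v j = w j.
    by move=> j js; have := congr1 (fun f : {ffun 'I_m -> F} => f j) E2; rewrite /= !ffunE js.
  have dK : forall be, be \in S -> \sum_j (v j - w j) * B be j = 0.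
    move=> be beS; have := congr1 (fun f : {ffun K -> F} => f be) E1; rewrite /= !ffunE beS => e.
    by under eq_bigr do rewrite mulrBl; rewrite sumrB e subrr.
  apply/ffunP => j0; apply/eqP; rewrite -subr_eq0; apply/negPn/negP => dj0.
  pose h' := [ffun j => h j + (v j - w j)].
  have h'K : Kp h'.
    apply/forallP => be; apply/implyP => beS.
    under eq_bigr do rewrite ffunE mulrDl.
    by rewrite big_split /= dK // hK' // addr0.
  have : supp h \proper supp h'.
    apply/properP; split.
      apply/subsetP => j; rewrite !inE ffunE => hj.
      by rewrite (dS j) ?inE // subrr addr0.
    have j0n : j0 \notin supp h.
      by apply: contra dj0 => /dS ->; rewrite subrr.
    exists j0 => //.
    move: j0n; rewrite !inE ffunE negbK => /eqP ->; by rewrite add0r.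
  have hm : (#|supp h'| <= #|supp h|)%N := hmax _ h'K.
  by move/proper_card; rewrite ltnNge hm.
have := count_inj (A := setX [set f : {ffun K -> F} | f \in pffun_on 0 S predT]
                       [set f : {ffun 'I_m -> F} | f \in pffun_on 0 (supp h) predT]) inj.
rewrite cardsX !card_pon cardsT card_ffun card_ord; apply.
by move=> v _; rewrite in_setX !pon_if.
Qed.

Lemma partB (F : finFieldType) m (K : finType) (S : {set K}) (h : {ffun 'I_m -> F})
  (T : 'I_m -> 'I_m -> 'I_m -> F) (G C : {ffun 'I_m -> F} -> K -> F) (A Rh : K -> 'I_m -> F) :
  (forall i j k, T i j k != 0 -> (i <= j)%N && (j <= k)%N) ->
  (forall i, T i i i = 1) ->
  (forall (x : {ffun 'I_m -> F}) i, \sum_k (\sum_j h j * T i j k) * x k =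
      \sum_(al in S) A al i * G x al + \sum_(ga in S) Rh ga i * C x ga) ->
  (#|F| ^ #|[set j | h j != 0%R]| <= #|F| ^ #|S| * #|F| ^ #|S|)%N.
Proof.
move=> Ttri Tdiag Hdec.
pose supp := [set j | h j != 0%R].
pose D := [set x : {ffun 'I_m -> F} | x \in pffun_on 0 supp predT].
pose psi (x : {ffun 'I_m -> F}) :=
  ([ffun al => if al \in S then G x al else 0], [ffun ga => if ga \in S then C x ga else 0]).
have inj : {in D &, injective psi}.
  move=> x y xD yD E.
  have E1 := congr1 fst E; have E2 := congr1 snd E; simpl in E1, E2.
  have Mxy : forall i, \sum_k (\sum_j h j * T i j k) * (x k - y k) = 0.
    move=> i; under eq_bigr do rewrite mulrBr; rewrite sumrB !Hdec; apply/eqP; rewrite subr_eq0; apply/eqP.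
    congr (_ + _); apply: eq_bigr => al alS; congr (_ * _).
      by have := congr1 (fun f : {ffun K -> F} => f al) E1; rewrite /= !ffunE alS.
    by have := congr1 (fun f : {ffun K -> F} => f al) E2; rewrite /= !ffunE alS.
  case: (pickP (fun k => x k != y k)) => [k0 nk0 | allEq]; last first.
    by apply/ffunP => k; apply/eqP; have := allEq k; move/negbFE.
  case: (@arg_maxnP _ k0 (fun k => x k != y k) (fun k => nat_of_ord k) nk0) => s sne smax.
  exfalso.
  have sx : forall z, z \in D -> z s != 0 -> h s != 0.
    move=> z; rewrite inE => /pffun_onP [/subsetP sub _] zs.
    by have := sub s; rewrite !inE; apply.
  have hs : h s != 0.
    case: (eqVneq (x s) 0) => [xs0 | ]; last exact: sx x xD.
    case: (eqVneq (y s) 0) => [ys0 | ]; last exact: sx y yD.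
    by move: sne; rewrite xs0 ys0 eqxx.
  have := Mxy s.
  rewrite (bigD1 s) //= [X in _ + X]big1 ?addr0; last first.
    move=> k ks.
    case: (ltngtP k s) => [ltks|ltsk|eks].
    - rewrite big1 ?mul0r // => j _.
      case: (eqVneq (T s j k) 0) => [->|/Ttri /andP [a b]]; first by rewrite mulr0.
      by move: ltks; rewrite ltnNge (leq_trans a b).
    - have : x k == y k.
        apply/negPn/negP => nk; have := smax k nk; rewrite /= leqNgt ltsk //.
      by move/eqP ->; rewrite subrr mulr0.
    - by move: ks; rewrite (_ : k = s) ?eqxx //; apply: val_inj.
  rewrite (bigD1 s) //= Tdiag mulr1 big1 ?addr0 => [|j js]; last first.
    case: (eqVneq (T s j s) 0) => [->|/Ttri /andP [a b]]; first by rewrite mulr0.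
    by move: js; rewrite (_ : j = s) ?eqxx //; apply: val_inj; apply/eqP; rewrite eqn_leq a b.
  by move/eqP; rewrite mulf_eq0 (negbTE hs) subr_eq0 (negbTE sne).
have := count_inj (A := setX [set f : {ffun K -> F} | f \in pffun_on 0 S predT]
                       [set f : {ffun K -> F} | f \in pffun_on 0 S predT]) inj.
rewrite cardsX !card_pon; apply.
by move=> v _; rewrite in_setX !pon_if.
Qed.

Theorem theorem3 (p n m : nat) (hp : prime p) (hn : (0 < n)%N)
    (a b c : 'I_m -> 'rV['F_p]_n) :
  tricolored_ordered_sum_free a b c -> (m <= 3 * num_monomials p n)%N.
Proof.
move=> [Hsum Hord].
move: a b c Hsum Hord; case: p hp => [//|q] hp a b c Hsum Hord.
have hF := fermat hp.
pose S := Sset q n.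
have [h [hK hA]] := partA S (fun be j => mono be (b j)).
pose T i j k : 'F_q.+1 := (a i + b j + c k == 0)%:R.
have Ttri : forall i j k, T i j k != 0 -> (i <= j)%N && (j <= k)%N.
  move=> i j k; rewrite /T; case: (a i + b j + c k =P 0) => [E _|_]; last by rewrite eqxx.
  by have [-> ->] := Hord _ _ _ E.
have Tdiag : forall i, T i i i = 1 by move=> i; rewrite /T Hsum eqxx.
have Hdec : forall (x : {ffun 'I_m -> 'F_q.+1}) i, \sum_k (\sum_j h j * T i j k) * x k =
   \sum_(al in S) mono al (a i) * (\sum_j \sum_k h j * x k * Pf al (b j) (c k))
 + \sum_(ga in S) (\sum_j h j * Rf ga (a i) (b j)) * (\sum_k x k * mono ga (c k)).
  move=> x i.
  have e : forall j k, (h j * T i j k) * x k =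
      h j * x k * (\sum_(al in S) mono al (a i) * Pf al (b j) (c k))
    + h j * x k * (\sum_(be in S) mono be (b j) * Qf be (a i) (c k))
    + h j * x k * (\sum_(ga in S) mono ga (c k) * Rf ga (a i) (b j)).
    by move=> j k; rewrite /T (L1 hF); ring.
  under eq_bigr do rewrite mulr_suml.
  under eq_bigr do under eq_bigr do rewrite e.
  under eq_bigr do rewrite !big_split /=.
  rewrite !big_split /=.
  have B0 : \sum_k \sum_j h j * x k * (\sum_(be in S) mono be (b j) * Qf be (a i) (c k)) = 0.
    apply: big1 => k _.
    under eq_bigr do rewrite mulr_sumr.
    rewrite exchange_big /=; apply: big1 => be beS.
    rewrite (eq_bigr (fun j => h j * mono be (b j) * (x k * Qf be (a i) (c k)))); last by move=> j _; ring.
    by rewrite -mulr_suml hK // mul0r.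
  rewrite B0 addr0; congr (_ + _).
  - rewrite exchange_big /=.
    under [RHS]eq_bigr do rewrite mulr_sumr.
    under [RHS]eq_bigr do under eq_bigr do rewrite mulr_sumr.
    under eq_bigr => j _ do under eq_bigr => k _ do rewrite mulr_sumr.
    under eq_bigr do rewrite exchange_big /=.
    rewrite exchange_big /=.
    apply: eq_bigr => al _; apply: eq_bigr => j _; apply: eq_bigr => k _; ring.
  - rewrite [RHS](eq_bigr (fun ga => \sum_j \sum_k (h j * Rf ga (a i) (b j)) * (x k * mono ga (c k)))); last first.
      by move=> ga _; rewrite mulr_suml; apply: eq_bigr => j _; rewrite mulr_sumr.
    under eq_bigr => j _ do under eq_bigr => k _ do rewrite mulr_sumr.
    rewrite exchange_big /=.
    under eq_bigr do rewrite exchange_big /=.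
    rewrite exchange_big /=.
    apply: eq_bigr => ga _; apply: eq_bigr => j _; apply: eq_bigr => k _; ring.
have hB := partB Ttri Tdiag Hdec.
have -> : num_monomials q.+1 n = #|S| by [].
rewrite card_Fp // in hA hB.
rewrite -!expnD !leq_exp2l ?prime_gt1 // in hA hB.
lia.
Qed.
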